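(* Let $G$ be a finite group of order $mn$, let $H$ be a normal subgroup of $G$ of order $n$, and suppose there exists an $(m,n,m-1,\frac{m-2}{n})$-relative difference set $R$ in $G$ relative to $H$. Then there exists a family of subsets of $G$ which partitions $G\setminus H$ and which is both an $(mn,n,m-1,m-2,0)$-DPDF and an $(mn,n,m-1,(m-2)(n-1),(m-1)n)$-EPDF in $G$.
   Context: Groups are written multiplicatively with identity $e$; $G^*=G\setminus\{e\}$. For $D\subseteq G$, $\Delta(D)$ is the multiset $\{xy^{-1}: x,y\in D, x\ne y\}$; for $D_1,D_2\subseteq G$, $\Delta(D_1,D_2)$ is the multiset $\{xy^{-1}:x\in D_1,y\in D_2\}$. For a family $A=\{A_1,\dots,A_s\}$ of pairwise disjoint subsets, ${\rm Int}(A)=\bigcup_i\Delta(A_i)$ and ${\rm Ext}(A)=\bigcup_{i\ne j}\Delta(A_i,A_j)$ (multiset unions). For $|G|=v$, a $(v,s,k,\lambda,\mu)$-DPDF is a family of $s$ pairwise disjoint $k$-subsets of $G^*$ with union $S$ such that ${\rm Int}(A)$ contains each element of $S$ exactly $\lambda$ times and each element of $G\setminus(S\cup\{e\})$ exactly $\mu$ times; a $(v,s,k,\lambda,\mu)$-EPDF is defined the same way using ${\rm Ext}(A)$. If $G$ has order $mn$ and $H$ is a normal subgroup of order $n$, a $k$-subset $R\subseteq G$ is an $(m,n,k,\lambda)$-relative difference set (RDS) relative to $H$ if $\Delta(R)$ contains each element of $G\setminus H$ exactly $\lambda$ times and no element of $H\setminus\{e\}$. A family partitions a set $X$ if its members are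 pairwise disjoint with union $X$. *)

(* Defs.v *)
From mathcomp Require Import all_boot all_fingroup.
Set Implicit Arguments. Unset Strict Implicit. Unset Printing Implicit Defensive.
Local Open Scope group_scope.

Section Defs.
Variable gT : finGroupType.

Definition dmult (D : {set gT}) (g : gT) : nat :=
  #|[set p in setX D D | (p.1 != p.2) && (p.1 * p.2^-1 == g)]|.

Definition dmult2 (D1 D2 : {set gT}) (g : gT) : nat :=
  #|[set p in setX D1 D2 | p.1 * p.2^-1 == g]|.

Definition int_mult s (A : 'I_s -> {set gT}) (g : gT) : nat :=
  \sum_(i < s) dmult (A i) g.

Definition ext_mult s (A : 'I_s -> {set gT}) (g : gT) : nat :=
  \sum_(i < s) \sum_(j < s | i != j) dmult2 (A i) (A j) g.

Definition fam_union s (A : 'I_s -> {set gT}) : {set gT} := \bigcup_(i < s) A i.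

Definition base_family (G : {set gT}) s k (A : 'I_s -> {set gT}) : Prop :=
  (forall i, A i \subset G :\ 1) /\ (forall i, #|A i| = k) /\
  (forall i j, i != j -> [disjoint A i & A j]).

Definition is_DPDF (G : {set gT}) v s k lam mu (A : 'I_s -> {set gT}) : Prop :=
  #|G| = v /\ base_family G k A /\
  (forall g, g \in fam_union A -> int_mult A g = lam) /\
  (forall g, g \in G :\: (fam_union A :|: [set 1]) -> int_mult A g = mu).

Definition is_EPDF (G : {set gT}) v s k lam mu (A : 'I_s -> {set gT}) : Prop :=
  #|G| = v /\ base_family G k A /\
  (forall g, g \in fam_union A -> ext_mult A g = lam) /\
  (forall g, g \in G :\: (fam_union A :|: [set 1]) -> ext_mult A g = mu).

Definition partitions s (A : 'I_s -> {set gT}) (X : {set gT}) : Prop :=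
  (forall i j, i != j -> [disjoint A i & A j]) /\ fam_union A = X.

Definition is_RDS (G H : {group gT}) m n k lam (R : {set gT}) : Prop :=
  #|G| = (m * n)%N /\ #|H| = n /\ H <| G /\ R \subset G /\ #|R| = k /\
  (forall g, g \in G :\: H -> dmult R g = lam) /\
  (forall g, g \in H :\ 1 -> dmult R g = 0%N).
End Defs.
Arguments is_DPDF {gT} G v s k lam mu A.
Arguments is_EPDF {gT} G v s k lam mu A.

(* Main.v *)
Require Import Defs.
From mathcomp Require Import all_boot all_fingroup zify.
Local Open Scope group_scope.

Lemma dmult2E (gT : finGroupType) (D1 D2 : {set gT}) (g : gT) :
  dmult2 D1 D2 g = (\sum_(x in D1) \sum_(y in D2) ((x * y^-1)%g == g))%N.
Proof.
rewrite /dmult2 -sum1_card big_mkcond /=.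
set S := [set _ in _ | _].
transitivity (\sum_x \sum_y (if (x, y) \in S then 1 else 0))%N.
  by rewrite pair_big; apply: eq_bigr => -[x y].
rewrite [RHS]big_mkcond; apply: eq_bigr => x _.
case Hx: (x \in D1).
  rewrite [RHS]big_mkcond; apply: eq_bigr => y _.
  by rewrite !inE /= Hx; case: (y \in D2); case: eqP.
by rewrite big1 // => y _; rewrite !inE /= Hx.
Qed.
Lemma dmultE (gT : finGroupType) (D : {set gT}) (g : gT) :
  dmult D g = (\sum_(x in D) \sum_(y in D) ((x != y) && ((x * y^-1)%g == g)))%N.
Proof.
rewrite /dmult -sum1_card big_mkcond /=.
set S := [set _ in _ | _].
transitivity (\sum_x \sum_y (if (x, y) \in S then 1 else 0))%N.
  by rewrite pair_big; apply: eq_bigr => -[x y].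
rewrite [RHS]big_mkcond; apply: eq_bigr => x _.
case Hx: (x \in D).
  rewrite [RHS]big_mkcond; apply: eq_bigr => y _.
  by rewrite !inE /= Hx; case: (y \in D); case: eqP; case: eqP.
by rewrite big1 // => y _; rewrite !inE /= Hx.
Qed.
Section S.
Variable gT : finGroupType.
Implicit Types D : {set gT}.
Lemma rtrans_sum D a (F : gT -> nat) :
  (\sum_(x in D :* a) F x = \sum_(x in D) F (x * a)%g)%N.
Proof.
rewrite -rcosetE /rcoset big_imset //=; by move=> x y _ _ /mulIg.
Qed.

Lemma dmult_rtrans D a g : dmult (D :* a) g = dmult D g.
Proof.
rewrite !dmultE rtrans_sum; apply: eq_bigr => x _; rewrite rtrans_sum.
apply: eq_bigr => y _.
by rewrite invMg mulgA mulgK (inj_eq (mulIg a)).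
Qed.

Lemma dmult2_rtrans D a g : dmult2 (D :* a) (D :* a) g = dmult2 D D g.
Proof.
rewrite !dmult2E rtrans_sum; apply: eq_bigr => x _; rewrite rtrans_sum.
apply: eq_bigr => y _.
by rewrite invMg mulgA mulgK.
Qed.

Lemma dmult2_diag D g : g != 1 -> dmult2 D D g = dmult D g.
Proof.
move=> g1; rewrite dmult2E dmultE; apply: eq_bigr => x _; apply: eq_bigr => y _.
case: eqP => // e; case: eqP => // xy; move: g1; rewrite -e xy mulgV eqxx //.
Qed.

Lemma ext_total s (A : 'I_s -> {set gT}) g :
  (forall i j, i != j -> [disjoint A i & A j]) ->
  (\sum_(i < s) \sum_(j < s) dmult2 (A i) (A j) g = dmult2 (fam_union A) (fam_union A) g)%N.
Proof.
move=> dA; rewrite dmult2E /fam_union partition_disjoint_bigcup //.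
apply: eq_bigr => i _.
under [RHS]eq_bigr => x _ do rewrite partition_disjoint_bigcup //.
rewrite exchange_big /=; apply: eq_bigr => j _; by rewrite dmult2E.
Qed.

Lemma eq_mulV (x y g : gT) : ((x * y^-1) == g) = (y == g^-1 * x).
Proof.
apply/eqP/eqP => [<-|->]; first by rewrite invMg invgK mulgKV.
by rewrite invMg invgK mulKVg.
Qed.

Lemma sum_pred1_in (U : {set gT}) a :
  (\sum_(y in U) (y == a) = (a \in U))%N.
Proof.
case aU: (a \in U).
  rewrite (bigD1 a) //= eqxx big1 ?addn0 //.
  by move=> y /andP[_ ya]; rewrite (negbTE ya).
by rewrite big1 // => y yU; case: eqP => // ya; rewrite ya aU in yU.
Qed.

Lemma sum_bool_card (U : {set gT}) (b : pred gT) :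
  (\sum_(x in U) (b x : nat) = #|[set x in U | b x]|)%N.
Proof.
rewrite -sum1_card [LHS]big_mkcond [RHS]big_mkcond; apply: eq_bigr => x _.
by rewrite !inE; case: (x \in U); case: (b x).
Qed.

Lemma dmult2_U (G H : {group gT}) g : H <| G -> g \in G ->
  dmult2 (G :\: H) (G :\: H) g =
  if g \in H then (#|G| - #|H|)%N else (#|G| - #|H| - #|H|)%N.
Proof.
move=> nHG gG; have sHG := normal_sub nHG.
have cU : #|G :\: H| = (#|G| - #|H|)%N by rewrite cardsD (setIidPr sHG).
rewrite dmult2E.
under eq_bigr => x _ do under eq_bigr => y _ do rewrite eq_mulV.
under eq_bigr => x _ do rewrite sum_pred1_in.
rewrite (sum_bool_card (G :\: H) (fun x => g^-1 * x \in G :\: H)).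
case gH: (g \in H).
  rewrite -cU (_ : [set _ in _ | _] = G :\: H) //. apply/setP => x; rewrite !inE.
  case xH: (x \in H); first by [].
  case xG: (x \in G) => //=.
  have gG' : g^-1 \in G by rewrite groupV. by rewrite (groupMl x (groupVr gH)) xH (groupMl x gG') xG.
rewrite (_ : [set _ in _ | _] = (G :\: H) :\: (g *: H)); last first.
  apply/setP => x; rewrite !inE mem_lcoset.
  case xH: (x \in H); first by rewrite andbF.
  case xG: (x \in G); last by rewrite !andbF.
  have gG' : g^-1 \in G by rewrite groupV. by rewrite (groupMl x gG') xG /= andbT.
have sgH : g *: H \subset G :\: H.
  apply/subsetP => y /lcosetP[h hH ->]; rewrite !inE (groupMl h gG) (subsetP sHG) // andbT.
  by rewrite groupMr // gH.
by rewrite cardsD (setIidPr sgH) card_lcoset cU.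
Qed.
End S.

Theorem mainTheorem2 (gT : finGroupType) (G H : {group gT}) (m n lam : nat) :
  #|G| = (m * n)%N -> #|H| = n -> H <| G ->
  (lam * n + 2)%N = m ->
  (exists R : {set gT}, is_RDS G H m n (m - 1)%N lam R) ->
  exists A : 'I_n -> {set gT},
    partitions A (G :\: H) /\
    is_DPDF G (m * n)%N n (m - 1)%N (m - 2)%N 0%N A /\
    is_EPDF G (m * n)%N n (m - 1)%N ((m - 2) * (n - 1))%N ((m - 1) * n)%N A.
Proof.
move=> cardG cardH nHG hm [R [_ [_ [_ [sRG [cR [Rlam RH]]]]]]].
subst m n.
have sHG := normal_sub nHG.
have inj : forall x y, x \in R -> y \in R -> x * y^-1 \in H -> x = y.
  move=> x y xR yR xyH; apply/eqP; apply/negPn/negP => nxy.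
  have : dmult R (x * y^-1) = 0%N.
    apply: RH; rewrite !inE xyH andbT; apply: contra nxy.
    by rewrite -(can_eq (mulgK y)) mul1g mulgKV.
  move/cards0_eq/setP/(_ (x, y)); rewrite !inE /= xR yR nxy eqxx.
  done.
have [c cG cRH] : exists2 c, c \in G & forall r, r \in R -> r * c^-1 \notin H.
  have idx : #|G : H| = (lam * #|H| + 2)%N.
    apply/eqP; rewrite -(eqn_pmul2l (cardG_gt0 H)) Lagrange // cardG mulnC //.
  set S := [set H :* x | x in R].
  have cS : #|S| = #|R|.
    apply: card_in_imset => x y xR yR Exy.
    apply: inj => //; rewrite -mem_rcoset -Exy rcoset_refl //.
  have : ~~ (rcosets H G \subset S).
    apply/negP => /subset_leq_card; rewrite cS cR.
    change #|rcosets H G| with #|G : H|; rewrite idx; lia.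
  case/subsetPn => C /rcosetsP[c cG ->] nS.
  exists c => // r rR; apply: contra nS => rcH.
  apply/imsetP; exists r => //; symmetry; apply/rcoset_eqP; rewrite mem_rcoset //.
pose e (i : 'I_#|H|) : gT := enum_val i.
have eH : forall i, e i \in H by move=> i; apply: enum_valP.
have nG : forall x, x \in G -> x \in 'N(H) by apply/subsetP/normal_norm.
pose A i := R :* (c^-1 * e i).
have sAU : forall i, A i \subset G :\: H.
  move=> i; apply/subsetP => y /rcosetP[z zR ->]; rewrite !inE.
  have zaG : z * (c^-1 * e i) \in G.
    by rewrite groupM ?(subsetP sRG z zR) // groupM ?groupV // (subsetP sHG _ (eH i)).
  rewrite zaG andbT.
  by rewrite mulgA (groupMr _ (eH i)) cRH.
have disjA : forall i j, i != j -> [disjoint A i & A j].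
  move=> i j nij; apply/pred0P => y /=.
  apply/negbTE/negP => /andP[]. case/rcosetP => r rR ->. case/rcosetP => s sR E.
  have rs : r = s.
    apply: inj => //.
    have -> : r = s * ((c^-1 * e j) * (c^-1 * e i)^-1).
      by rewrite mulgA -E mulgK.
    have sG : s \in G by apply: (subsetP sRG).
    have KH : (c^-1 * e j) * (c^-1 * e i)^-1 \in H.
      rewrite (_ : _ * _ = (e j * (e i)^-1) ^ c); last first.
        by rewrite conjgE invMg invgK !mulgA.
      by rewrite memJ_norm ?nG // groupM ?groupV.
    set K := (c^-1 * e j) * (c^-1 * e i)^-1 in KH *.
    rewrite (_ : s * K * s^-1 = K ^ s^-1); last first.
      by rewrite conjgE invgK !mulgA.
    by rewrite memJ_norm ?nG ?groupV.
  move: E; rewrite rs => /mulgI /mulgI /enum_val_inj ij.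
  by rewrite ij eqxx in nij.
have cardA : forall i, #|A i| = #|R| by move=> i; apply: card_rcoset.
have cU : #|G :\: H| = (#|G| - #|H|)%N by rewrite cardsD (setIidPr sHG).
have unionA : fam_union A = G :\: H.
  apply/eqP; rewrite eqEcard; apply/andP; split.
    by apply/bigcupsP => i _; apply: sAU.
  have cardU : #|fam_union A| = (#|H| * #|R|)%N.
    rewrite -sum1_card /fam_union partition_disjoint_bigcup //.
    under eq_bigr do rewrite sum1_card cardA.
    by rewrite sum_nat_const card_ord.
  rewrite cardU cU cardG cR; nia.
have intA : forall g, int_mult A g = (#|H| * dmult R g)%N.
  move=> g; rewrite /int_mult; under eq_bigr do rewrite dmult_rtrans.
  by rewrite sum_nat_const card_ord.
have extA : forall g, g != 1 ->
    ext_mult A g = (dmult2 (G :\: H) (G :\: H) g - #|H| * dmult R g)%N.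
  move=> g g1; rewrite -unionA -ext_total //.
  have h : forall i, (\sum_(j < #|H|) dmult2 (A i) (A j) g =
      dmult R g + \sum_(j < #|H| | i != j) dmult2 (A i) (A j) g)%N.
    move=> i; rewrite (bigD1 i) //= dmult2_rtrans dmult2_diag //.
    by congr (_ + _); apply: eq_bigl => j; rewrite eq_sym.
  under eq_bigr do rewrite h.
  by rewrite big_split /= sum_nat_const card_ord /ext_mult addKn.
have base : base_family G (lam * #|H| + 2 - 1) A.
  split; last split => //.
    move=> i; apply: subset_trans (sAU i) _; apply/subsetP => x.
    rewrite !inE => /andP[xH ->]; rewrite andbT; apply: contra xH => /eqP ->.
    exact: group1.
  by move=> i; rewrite cardA cR.
have memU : forall g, g \in G :\: H -> g != 1.
  move=> g; rewrite !inE => /andP[gH _]; apply: contra gH => /eqP ->; exact: group1.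
have memH : forall g, g \in G :\: (fam_union A :|: [set 1]) -> g \in H^#.
  move=> g; rewrite unionA !inE.
  by case: (g \in H); case: (g \in G); case: (g == 1).
exists A; split; first by split.
split.
  split; first by rewrite cardG.
  split; first exact: base.
  split.
    move=> g; rewrite unionA => gU; rewrite intA Rlam //; lia.
  by move=> g /memH gH; rewrite intA RH // muln0.
split; first by rewrite cardG.
split; first exact: base.
split.
  move=> g; rewrite unionA => gU.
  have gG : g \in G by move: gU; rewrite inE => /andP[].
  have gnH : g \notin H by move: gU; rewrite inE => /andP[].
  rewrite extA ?memU // dmult2_U // (negbTE gnH) Rlam // cardG; nia.
move=> g /memH gH.
have g1 : g != 1 by move: gH; rewrite !inE => /andP[].
have gH' : g \in H by move: gH; rewrite !inE => /andP[].
rewrite extA // dmult2_U ?(subsetP sHG) // gH' RH // muln0 subn0 cardG; nia.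
Qed.
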